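(* Let $q\ge 2$ and $n\ge 3$. If $\mathcal C\subseteq[q]^n$ is a code with insdel distance $d_I(\mathcal C)=2n-2$, then $|\mathcal C|\le \frac{q^2+q}{2}$.
   Context: $[q]=\{1,\dots,q\}$. For $\mathbf u,\mathbf v\in[q]^n$, the insdel distance $d_I(\mathbf u,\mathbf v)$ is the minimum number of insertions and deletions transforming $\mathbf u$ into $\mathbf v$; equivalently $d_I(\mathbf u,\mathbf v)=2n-2\ell_{\rm LCS}(\mathbf u,\mathbf v)$ where $\ell_{\rm LCS}$ is the length of a longest common subsequence. $d_I(\mathcal C)$ is the minimum insdel distance between distinct codewords. *)

(* Defs.v *)
From mathcomp Require Import all_boot.
Set Implicit Arguments. Unset Strict Implicit. Unset Printing Implicit Defensive.

Definition lcs_len (q n : nat) (u v : n.-tuple 'I_q) : nat :=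
  \max_(k < n.+1 | [exists s : k.-tuple 'I_q, subseq s u && subseq s v]) k.

Definition insdel_dist (q n : nat) (u v : n.-tuple 'I_q) : nat :=
  2 * n - 2 * lcs_len u v.

Definition code_insdel_dist_eq (q n : nat) (C : {set n.-tuple 'I_q}) (d : nat) : Prop :=
  (forall u v, u \in C -> v \in C -> u != v -> d <= insdel_dist u v) /\
  (exists u v, [/\ u \in C, v \in C, u != v & insdel_dist u v = d]).

(* Main.v *)
Require Import Defs.
From mathcomp Require Import all_boot.
From mathcomp Require Import zify.

Definition gw {q : nat} (d : 'I_q) (s : seq 'I_q) (bb : bool) : ('I_q * 'I_q) + 'I_q :=
  let a := nth d s 0 in let b := nth d s 1 in let c := nth d s 2 in
  if a == b then (if bb then inr a else inl (a, a))
  else if a == c then (if bb then inr a else inl (a, a))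
  else if b == c then (if bb then inr b else inl (b, b))
  else if bb then inl (a, c) else inl (a, b).

Definition wit {q : nat} (z : ('I_q * 'I_q) + 'I_q) : seq 'I_q :=
  match z with inl (x, y) => [:: x; y] | inr x => [:: x; x] end.

Lemma sub_ab {T : eqType} (a b : T) s : subseq [:: a; b] (a :: b :: s).
Proof. by rewrite /= !eqxx /=; case: s. Qed.

Lemma sub_ac {T : eqType} (a b c : T) s : subseq [:: a; c] (a :: b :: c :: s).
Proof.
have H : subseq [:: c] (b :: c :: s) by rewrite sub1seq !inE eqxx orbT.
exact: (@cat_subseq _ [:: a] [:: c] [:: a] (b :: c :: s) (subseq_refl _) H).
Qed.

Lemma sub_bc {T : eqType} (a b c : T) s : subseq [:: b; c] (a :: b :: c :: s).
Proof.
apply: subseq_trans (subseq_cons _ a); exact: sub_ab.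
Qed.

Lemma gw_wit {q} (d : 'I_q) s bb : 3 <= size s -> subseq (wit (gw d s bb)) s.
Proof.
case: s => [|a [|b [|c t]]] // _; rewrite /gw [nth _ _ 0]/= [nth _ _ 1]/= [nth _ _ 2]/=.
case: eqP => [<-|ab]; first by case: bb; apply: sub_ab.
case: eqP => [<-|ac]; first by case: bb; apply: sub_ac.
case: eqP => [<-|bc]; first by case: bb; apply: sub_bc.
by case: bb; [apply: sub_ac | apply: sub_ab].
Qed.

Lemma gw_diff {q} (d : 'I_q) s : 3 <= size s -> gw d s true != gw d s false.
Proof.
case: s => [|a [|b [|c t]]] // _; rewrite /gw [nth _ _ 0]/= [nth _ _ 1]/= [nth _ _ 2]/=.
have [ab|ab] := eqVneq a b => //.
have [ac|ac] := eqVneq a c => //.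
have [bc|bc] := eqVneq b c => //.
by apply/eqP => -[] E; rewrite E eqxx in bc.
Qed.

Theorem lemma3p4 (q n : nat) (C : {set n.-tuple 'I_q}) :
  2 <= q -> 3 <= n -> code_insdel_dist_eq C (2 * n - 2) ->
  #|C| <= (q ^ 2 + q) %/ 2.
Proof.
case: q C => [|q] C // q2 n3 [Hd _].
have nocommon : forall u v (x y : 'I_q.+1), u \in C -> v \in C -> u != v ->
    subseq [:: x; y] u -> subseq [:: x; y] v -> False.
  move=> u v x y uC vC uv su sv.
  have := Hd u v uC vC uv; rewrite /insdel_dist.
  have : 2 <= lcs_len u v.
    have h2 : 2 < n.+1 by apply: leq_trans n3 _.
    apply: (@leq_bigmax_cond _ _ (fun k : 'I_n.+1 => nat_of_ord k) (Ordinal h2)) => /=.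
    by apply/existsP; exists [tuple x; y]; rewrite su sv.
  move: (lcs_len u v) => l; lia.
pose f (p : n.-tuple 'I_q.+1 * bool) := gw ord0 p.1 p.2.
pose A := setX C [set: bool].
have inj : {in A &, injective f}.
  move=> [u b1] [v b2]; rewrite !inE /= !andbT => uC vC E.
  have [uv|uv] := eqVneq u v.
    subst v; congr (_, _); move: E; rewrite /f /=.
    have s3 : 3 <= size u by rewrite size_tuple.
    case: b1; case: b2 => // E; have := gw_diff ord0 u s3; by rewrite E ?eqxx.
  exfalso.
  have su := gw_wit ord0 u b1 (leq_trans n3 (eq_leq (esym (size_tuple u)))).
  have sv := gw_wit ord0 v b2 (leq_trans n3 (eq_leq (esym (size_tuple v)))).
  move: su sv; rewrite /f /= in E; rewrite E.
  case: (gw ord0 v b2) => [[x y]|x] /= su sv; exact: (nocommon u v x _ uC vC uv su sv).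
have := card_in_imset inj.
rewrite cardsX cardsT card_bool => E.
rewrite leq_divRL // -E.
apply: leq_trans (max_card _) _.
by rewrite card_sum card_prod card_ord expnS expn1.
Qed.
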